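(* Index $\mathbb{R}^{2^L}$ by leaves $j \in \{0,\dots,2^L-1\}$ of a complete binary tree of depth $L$ in which each node at depth $k$ corresponds to a dyadic block $\{a,\dots,a+2^{L-k}-1\}$ of consecutive indices whose two children are its two halves, and let $W_L$ act by the induced permutation representation. The matched unitary of this representation is the Haar wavelet basis matrix, with columns ordered by scale: the scaling function $\phi(j) = 2^{-L/2}$, then for $s = 1,\dots,L$ the mother wavelets $\psi_{s,0},\dots,\psi_{s,2^{s-1}-1}$, where for $p \in \{0,\dots,2^{s-1}-1\}$, $a = p\,2^{L-s+1}$, $h = 2^{L-s}$, $\psi_{s,p}(j) = 2^{(s-L-1)/2}$ if $a \le j < a+h$, $-2^{(s-L-1)/2}$ if $a+h \le j < a+2h$, and $0$ otherwise. For every $W_L$-invariant covariance $\mathbf{R}$ on $\mathbb{R}^{2^L}$ the Haar wavelet transform diagonalizes $\mathbf{R}$, and the eigenvalue on the scale-$s$ subspace $\mathrm{span}\{\psi_{s,p}\}_p$ is $2^{s-1}$-fold degenerate.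
   Context: $W_L = \mathbb{Z}_2 \wr \cdots \wr \mathbb{Z}_2$ ($L$ levels), defined by $W_1 = \mathbb{Z}_2$, $W_d = W_{d-1}^2 \rtimes \mathbb{Z}_2$, acts on the leaves by tree-automorphisms: at each internal node a $\mathbb{Z}_2$ factor swaps the two child subtrees, independently across non-overlapping subtrees. A covariance (real symmetric positive semidefinite matrix) $\mathbf{R}$ is $W_L$-invariant if $\mathbf{P}_g \mathbf{R} \mathbf{P}_g^{-1} = \mathbf{R}$ for every permutation matrix $\mathbf{P}_g$, $g \in W_L$. The matched unitary is an orthogonal basis diagonalizing every such invariant covariance. *)

(* Defs.v *)
From HB Require Import structures.
From mathcomp Require Import all_boot all_order all_algebra all_fingroup.
Set Implicit Arguments. Unset Strict Implicit. Unset Printing Implicit Defensive.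
Import Order.TTheory GRing.Theory Num.Theory.
Local Open Scope ring_scope.

(* Leaves of the complete binary tree of depth L are 'I_(2^L).  The node at
   depth k (0 <= k <= L) with block index b is the dyadic block
   {b*2^(L-k), ..., b*2^(L-k) + 2^(L-k) - 1}; leaf j lies in block j %/ 2^(L-k). *)

(* W_L acting on leaves: the tree automorphisms of the complete binary tree of
   depth L, i.e. the permutations of the leaves preserving, at every depth k,
   the relation "lie in the same depth-k dyadic block". *)
Definition W (L : nat) : {set {perm 'I_(2 ^ L)}} :=
  [set g : {perm 'I_(2 ^ L)} | [forall k : 'I_L.+1, forall i : 'I_(2 ^ L),
     forall j : 'I_(2 ^ L),
       (i %/ 2 ^ (L - k) == j %/ 2 ^ (L - k))%N ==
       (g i %/ 2 ^ (L - k) == g j %/ 2 ^ (L - k))%N]].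

Definition covariance (R : realFieldType) (n : nat) (M : 'M[R]_n) : Prop :=
  M^T = M /\ forall v : 'cV[R]_n, 0 <= (v^T *m M *m v) 0 0.

Definition W_invariant (R : realFieldType) (L : nat) (M : 'M[R]_(2 ^ L)) : Prop :=
  forall g, g \in W L -> perm_mx g *m M *m invmx (perm_mx g) = M.

Definition haar_scale (c : nat) : nat :=
  if c == 0%N then 0%N else (trunc_log 2 c).+1.

(* Haar wavelet entry at leaf j, column c (columns ordered by scale:
   c = 0 is phi, c = 2^(s-1) + p is psi_{s,p}). *)
Definition haar_entry (R : rcfType) (L j c : nat) : R :=
  if c == 0%N then (Num.sqrt (2 ^+ L))^-1
  else
    let s := haar_scale c in
    let p := (c - 2 ^ (s - 1))%N in
    let h := (2 ^ (L - s))%N in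
    let a := (p * 2 ^ (L - s + 1))%N in
    let v := (Num.sqrt (2 ^+ (L + 1 - s)))^-1 in   (* = 2^((s-L-1)/2) *)
    if (a <= j < a + h)%N then v
    else if (a + h <= j < a + 2 * h)%N then - v
    else 0.

Definition haar_mx (R : rcfType) (L : nat) : 'M[R]_(2 ^ L) :=
  \matrix_(j, c) haar_entry R L j c.

(* Main.v *)
From Stdlib Require Import PeanoNat.
From HB Require Import structures.
From mathcomp Require Import all_boot all_order all_algebra all_fingroup.
From mathcomp Require Import zify.
Require Import Defs.

Definition xorn := Nat.lxor.

Lemma expnE' m n : expn m n = Nat.pow m n.
Proof. elim: n => [|n IH] //. by rewrite expnS IH /= mulnE. Qed.

Lemma divnE' m d : 0 < d -> m %/ d = Nat.div m d.
Proof.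
move=> d0. apply: Nat.div_unique (m %% d) _ _.
  by apply/ltP; rewrite ltn_mod.
rewrite {1}(divn_eq m d). rewrite -plusE -multE. lia.
Qed.

Lemma xorn_div x m a : xorn x m %/ 2 ^ a = xorn (x %/ 2 ^ a) (m %/ 2 ^ a).
Proof.
rewrite !divnE' ?expn_gt0 // expnE' -!Nat.shiftr_div_pow2.
exact: Nat.shiftr_lxor.
Qed.

Lemma xornK m : involutive (xorn ^~ m).
Proof. move=> x; by rewrite /xorn Nat.lxor_assoc Nat.lxor_nilpotent Nat.lxor_0_r. Qed.

Lemma xornKr m x : xorn (xorn x m) m = x.
Proof. exact: xornK. Qed.

Lemma xorn0 x : xorn x 0 = x.
Proof. exact: Nat.lxor_0_r. Qed.

Lemma xorn_inj m : injective (xorn ^~ m).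
Proof. exact: inv_inj (xornK m). Qed.

Lemma xornC x y : xorn x y = xorn y x.
Proof. exact: Nat.lxor_comm. Qed.

Lemma xornA x y z : xorn (xorn x y) z = xorn x (xorn y z).
Proof. exact: Nat.lxor_assoc. Qed.

Lemma xorn_double p r : xorn (2 * p) (2 * r) = 2 * xorn p r.
Proof.
rewrite -!multE. apply: Nat.bits_inj => [[|n]].
  by rewrite Nat.lxor_spec !Nat.testbit_even_0.
rewrite Nat.lxor_spec !Nat.testbit_even_succ ?Nat.lxor_spec //; lia.
Qed.

Lemma xorn_double1 p r : xorn (2 * p + 1) (2 * r) = 2 * xorn p r + 1.
Proof.
rewrite -!multE -!plusE. apply: Nat.bits_inj => [[|n]].
  by rewrite Nat.lxor_spec Nat.testbit_even_0 !Nat.testbit_odd_0.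
rewrite Nat.lxor_spec !Nat.testbit_odd_succ ?Nat.testbit_even_succ ?Nat.lxor_spec //; lia.
Qed.

Lemma xorn_2p1 p : xorn (2 * p) 1 = 2 * p + 1.
Proof.
have -> : 1 = 2 * 0 + 1 by [].
rewrite xornC xorn_double1 xornC. by rewrite /xorn Nat.lxor_0_r.
Qed.

Lemma xorn_2p1' p : xorn (2 * p + 1) 1 = 2 * p.
Proof. by rewrite -xorn_2p1 xornKr. Qed.

Lemma xorn_lt x y k : x < 2 ^ k -> y < 2 ^ k -> xorn x y < 2 ^ k.
Proof.
move=> hx hy.
have h : xorn x y %/ 2 ^ k = 0 by rewrite xorn_div !divn_small.
have := divn_eq (xorn x y) (2 ^ k). rewrite h mul0n add0n => ->.
by rewrite ltn_mod expn_gt0.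
Qed.

Definition tauK (K b m x : nat) : nat := if x %/ 2 ^ K == b then xorn x m else x.

Lemma tau_div K b m x a : a <= K -> m < 2 ^ K ->
  tauK K b m x %/ 2 ^ a = tauK (K - a) b (m %/ 2 ^ a) (x %/ 2 ^ a).
Proof.
move=> aK mK.
have eK : x %/ 2 ^ K = x %/ 2 ^ a %/ 2 ^ (K - a) by rewrite -divnMA -expnD subnKC.
rewrite /tauK -eK. by case: ifP => _; rewrite ?xorn_div.
Qed.

Lemma tau_div_ge K b m x a : K <= a -> m < 2 ^ K -> tauK K b m x %/ 2 ^ a = x %/ 2 ^ a.
Proof.
move=> Ka mK. rewrite /tauK; case: ifP => _ //.
rewrite xorn_div (divn_small (m:=m)) ?xorn0 //.
apply: leq_trans mK _; by rewrite leq_exp2l.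
Qed.

Lemma tau_block K b m x : m < 2 ^ K -> tauK K b m x %/ 2 ^ K = x %/ 2 ^ K.
Proof. by move=> mK; rewrite tau_div_ge. Qed.

Lemma tauKK K b m : m < 2 ^ K -> involutive (tauK K b m).
Proof.
move=> mK x. rewrite {1}/tauK tau_block //.
rewrite /tauK; case: ifP => -> //. by rewrite xornKr.
Qed.

Lemma tau_lt K b m L x : K <= L -> m < 2 ^ K -> x < 2 ^ L -> tauK K b m x < 2 ^ L.
Proof.
move=> KL mK xL.
have h : tauK K b m x %/ 2 ^ L = 0 by rewrite tau_div_ge // divn_small.
have := divn_eq (tauK K b m x) (2 ^ L). rewrite h mul0n add0n => ->.
by rewrite ltn_mod expn_gt0.
Qed.

Section Tau.
Variables (L K b m : nat) (KL : K <= L) (mK : m < 2 ^ K).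

Definition tauO (i : 'I_(2 ^ L)) : 'I_(2 ^ L) := Ordinal (@tau_lt K b m L i KL mK (ltn_ord i)).

Lemma tauO_inj : injective tauO.
Proof.
move=> i j /(congr1 val) /= h. apply: val_inj => /=.
by rewrite -(@tauKK K b m mK i) h (@tauKK K b m mK).
Qed.

Definition tauP : {perm 'I_(2 ^ L)} := perm tauO_inj.

Lemma tauPE i : val (tauP i) = tauK K b m i.
Proof. by rewrite permE. Qed.

Lemma tauP_W : tauP \in W L.
Proof.
rewrite inE; apply/forallP => k; apply/forallP => i; apply/forallP => j.
rewrite !tauPE. set a := (L - k)%N.
case: (leqP a K) => aK.
  rewrite !tau_div //.
  by rewrite (inj_eq (can_inj (@tauKK _ b _ _))) // ltn_divLR ?expn_gt0 // -expnD subnK.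
by rewrite !tau_div_ge // ltnW.
Qed.
End Tau.

Set Implicit Arguments. Unset Strict Implicit.
Import GRing.Theory Num.Theory.
Local Open Scope ring_scope.

Lemma W_inv_entry (R : realFieldType) L (M : 'M[R]_(2 ^ L)) :
  W_invariant M -> forall g, g \in W L -> forall i j, M (g i) (g j) = M i j.
Proof.
move=> hM g gW i j.
have h1 : perm_mx g *m M = M *m perm_mx g.
  by rewrite -{2}(hM g gW) -!mulmxA mulVmx ?mulmx1 ?unitmx_perm.
have := congr1 (fun A : 'M[R]_(2 ^ L) => A i (g j)) h1.
rewrite -row_permE. have -> : M *m perm_mx g = col_perm g^-1 M by rewrite col_permE invgK. rewrite !mxE. by rewrite permK => ->.
Qed.

Definition bil (R : realFieldType) n (u v : 'I_n -> R) (M : 'M[R]_n) :=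
  \sum_i \sum_j u i * M i j * v j.
Arguments bil {R n}.

Lemma bil_transport (R : realFieldType) n (M : 'M[R]_n) (g : {perm 'I_n}) u v :
  (forall i j, M (g i) (g j) = M i j) ->
  bil (fun i => u (g i)) (fun i => v (g i)) M = bil u v M.
Proof.
move=> hg. rewrite /bil [RHS](reindex_inj (@perm_inj _ g)) /=.
apply: eq_bigr => i _. rewrite [RHS](reindex_inj (@perm_inj _ g)) /=.
by apply: eq_bigr => j _; rewrite hg.
Qed.

Lemma DE (R : realFieldType) n (H M : 'M[R]_n) c d :
  (H^T *m M *m H) c d = bil (fun i => H i c) (fun j => H j d) M.
Proof.
rewrite /bil mxE. under eq_bigr do rewrite mxE big_distrl /=.
rewrite exchange_big /=. apply: eq_bigr => i _; apply: eq_bigr => j _.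
by rewrite mxE.
Qed.

Lemma bil_zero (R : realFieldType) n (M : 'M[R]_n) (g : {perm 'I_n}) u v :
  (forall i j, M (g i) (g j) = M i j) ->
  (forall i, u (g i) = - u i) -> (forall i, v (g i) = v i) ->
  bil u v M = 0.
Proof.
move=> hg hu hv. have := bil_transport u v hg.
rewrite /bil. under eq_bigr do under eq_bigr do rewrite hu hv.
under eq_bigr do under eq_bigr do rewrite !mulNr.
under eq_bigr do rewrite sumrN. rewrite sumrN.
move/eqP; rewrite eq_sym -addr_eq0 -mulr2n mulrn_eq0 /=. by move/eqP.
Qed.

Lemma bil_sym (R : realFieldType) n (M : 'M[R]_n) u v :
  M^T = M -> bil u v M = bil v u M.
Proof.
move=> hM. rewrite /bil exchange_big /=. apply: eq_bigr => i _; apply: eq_bigr => j _.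
rewrite -[in RHS]hM mxE [LHS]mulrC. by rewrite [u j * _]mulrC mulrA.
Qed.

Definition ht (c : nat) : nat := trunc_log 2 c.
Definition he (L c : nat) : nat := (L - (ht c).+1)%N.
Definition hp (c : nat) : nat := (c - 2 ^ ht c)%N.
Definition hv (R : rcfType) (e : nat) : R := (Num.sqrt (2 ^+ e.+1))^-1.
Definition hF (R : rcfType) (p : nat) (v : R) (x : nat) : R :=
  if x == (2 * p)%N then v else if x == (2 * p + 1)%N then - v else 0.

Lemma cond1 p e j :
  ((p * 2 ^ (e + 1) <= j < p * 2 ^ (e + 1) + 2 ^ e)%N) = (j %/ 2 ^ e == 2 * p)%N.
Proof.
have d0 : (0 < 2 ^ e)%N by rewrite expn_gt0.
have -> : (p * 2 ^ (e + 1) = (2 * p) * 2 ^ e)%N by rewrite expnD expn1; lia.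
have -> : ((2 * p) * 2 ^ e + 2 ^ e = (2 * p + 1) * 2 ^ e)%N by lia.
rewrite -leq_divRL // -ltn_divLR //. lia.
Qed.

Lemma cond2 p e j :
  ((p * 2 ^ (e + 1) + 2 ^ e <= j < p * 2 ^ (e + 1) + 2 ^ e + 2 ^ e)%N) =
  (j %/ 2 ^ e == 2 * p + 1)%N.
Proof.
have d0 : (0 < 2 ^ e)%N by rewrite expn_gt0.
have -> : (p * 2 ^ (e + 1) + 2 ^ e = (2 * p + 1) * 2 ^ e)%N by rewrite expnD expn1; lia.
have -> : ((2 * p + 1) * 2 ^ e + 2 ^ e = (2 * p + 2) * 2 ^ e)%N by lia.
rewrite -leq_divRL // -ltn_divLR //. lia.
Qed.

Lemma ht_facts L c : (0 < c)%N -> (c < 2 ^ L)%N ->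
  [/\ (ht c < L)%N, (hp c < 2 ^ ht c)%N, (2 ^ ht c <= c)%N & L = (ht c + he L c + 1)%N].
Proof.
move=> c0 cL. have [lo hi] := andP (trunc_log_bounds (isT : (1 < 2)%N) c0).
rewrite /hp /he -/(ht c) in lo hi *.
have htL : (ht c < L)%N.
  rewrite -(ltn_exp2l _ _ (isT : (1 < 2)%N)). exact: leq_ltn_trans lo cL.
split => //.
- rewrite expnS in hi. lia.
- lia.
Qed.

Lemma haar_entryE (R : rcfType) L j c : (0 < c)%N -> (c < 2 ^ L)%N ->
  haar_entry R L j c = hF (hp c) (hv R (he L c)) (j %/ 2 ^ (he L c)).
Proof.
move=> c0 cL. have [htL hpl lo eL] := ht_facts c0 cL.
rewrite /haar_entry /haar_scale. have -> : (c == 0)%N = false by case: (c) c0.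
rewrite /= -/(ht c) subn1 /= -/(hp c).
have -> : (L - (ht c).+1 + 1 = he L c + 1)%N by [].
have -> : (L + 1 - (ht c).+1 = (he L c).+1)%N by rewrite /he; lia.
rewrite -/(he L c) cond1 [(2 * 2 ^ _)%N]mul2n -addnn addnA cond2 /hF /hv.
by [].
Qed.

Lemma hF_flip (R : rcfType) p (v : R) X : hF p v (tauK 1 p 1 X) = - hF p v X.
Proof.
rewrite /tauK expn1. case: eqP => hX.
  have [->|->] : X = (2 * p)%N \/ X = (2 * p + 1)%N by lia.
    rewrite xorn_2p1 /hF. have -> : (2 * p + 1 == 2 * p)%N = false by lia.
    by rewrite !eqxx.
  rewrite xorn_2p1' /hF. have -> : (2 * p + 1 == 2 * p)%N = false by lia.
  by rewrite !eqxx opprK.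
rewrite /hF. have -> : (X == 2 * p)%N = false by lia.
have -> : (X == 2 * p + 1)%N = false by lia.
by rewrite oppr0.
Qed.

Lemma hF_other (R : rcfType) p p' (v : R) X : p != p' -> hF p' v (tauK 1 p 1 X) = hF p' v X.
Proof.
move=> pp. rewrite /tauK expn1. case: eqP => hX //.
have h1 : (X == 2 * p')%N = false by lia.
have h2 : (X == 2 * p' + 1)%N = false by lia.
have [->|->] : X = (2 * p)%N \/ X = (2 * p + 1)%N by lia.
  rewrite xorn_2p1 /hF. have -> : (2 * p + 1 == 2 * p')%N = false by lia.
  have -> : (2 * p + 1 == 2 * p' + 1)%N = false by lia.
  have -> : (2 * p == 2 * p')%N = false by lia.
  have -> : (2 * p == 2 * p' + 1)%N = false by lia. by [].
rewrite xorn_2p1' /hF. have -> : (2 * p + 1 == 2 * p')%N = false by lia.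
have -> : (2 * p + 1 == 2 * p' + 1)%N = false by lia.
have -> : (2 * p == 2 * p')%N = false by lia.
have -> : (2 * p == 2 * p' + 1)%N = false by lia. by [].
Qed.

Lemma hF_shift (R : rcfType) p p' (v : R) X :
  hF p' v (xorn X (2 * xorn p p')) = hF p v X.
Proof.
rewrite /hF !(inv_eq (xornK _)) xorn_double xorn_double1.
have -> : xorn p' (xorn p p') = p by rewrite [xorn p p']xornC -xornA /xorn Nat.lxor_nilpotent /= Nat.lxor_0_l.
by [].
Qed.

Lemma haar_entry0 (R : rcfType) L x y : haar_entry R L x 0 = haar_entry R L y 0.
Proof. by rewrite /haar_entry eqxx. Qed.

Lemma tau_div_e e p x :
  (tauK (e + 1) p (2 ^ e) x %/ 2 ^ e = tauK 1 p 1 (x %/ 2 ^ e))%N.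
Proof.
rewrite tau_div ?leq_addr ?ltn_exp2l ?addn1 //.
by rewrite divnn expn_gt0 /= -addn1 addKn.
Qed.

Lemma col_flip (R : rcfType) L (c : 'I_(2 ^ L)) : (0 < c)%N ->
  exists2 g, g \in W L &
   (forall j, haar_entry R L (g j) c = - haar_entry R L j c) /\
   (forall d : 'I_(2 ^ L), d != c -> ((d == 0 :> nat) || (he L c <= he L d))%N ->
      forall j, haar_entry R L (g j) d = haar_entry R L j d).
Proof.
move=> c0. have [htL hpl lo eL] := ht_facts c0 (ltn_ord c).
set e := he L c in eL *. set p := hp c in hpl *.
have KL : (e + 1 <= L)%N by lia.
have mK : (2 ^ e < 2 ^ (e + 1))%N by rewrite ltn_exp2l // addn1.
exists (@tauP L (e + 1) p (2 ^ e) KL mK); first exact: tauP_W.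
split.
  move=> j. rewrite tauPE !haar_entryE // -/e -/p tau_div_e. exact: hF_flip.
move=> d dc hd j. case: (posnP d) => d0.
  by rewrite d0 (haar_entry0 _ _ _ j).
have ed : (he L c <= he L d)%N by move: hd; rewrite -[(d == 0 :> nat)]negbK -lt0n d0.
have [htL' hpl' lo' eL'] := ht_facts d0 (ltn_ord d).
rewrite tauPE !haar_entryE //.
rewrite leq_eqVlt in ed. case/orP: ed => [/eqP ed | ed].
  rewrite -ed tau_div_e hF_other //.
  apply/eqP => hpe. move/eqP: dc; apply; apply: val_inj => /=.
  have hte : ht c = ht d by lia.
  move: hpe; rewrite /p /hp hte => hpe.
  rewrite hte in lo. lia.
by rewrite tau_div_ge // addn1.
Qed.

Lemma col_shift (R : rcfType) L (c c' : 'I_(2 ^ L)) : (0 < c)%N -> (0 < c')%N ->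
  ht c = ht c' ->
  exists2 g, g \in W L & forall j, haar_entry R L (g j) c' = haar_entry R L j c.
Proof.
move=> c0 c0' hte.
have [htL hpl lo eL] := ht_facts c0 (ltn_ord c).
have [htL' hpl' lo' eL'] := ht_facts c0' (ltn_ord c').
have ee : he L c' = he L c by rewrite /he hte.
set e := he L c in eL ee *. set p := hp c in hpl *. set p' := hp c' in hpl' *.
set q := xorn p p'.
have qlt : (q < 2 ^ ht c)%N by apply: xorn_lt => //; rewrite hte.
have KL : (L <= L)%N by [].
have mK : (q * 2 ^ (e + 1) < 2 ^ L)%N.
  have -> : (2 ^ L = 2 ^ ht c * 2 ^ (e + 1))%N by rewrite -expnD addnA -eL.
  by rewrite ltn_pmul2r ?expn_gt0.
exists (@tauP L L 0 (q * 2 ^ (e + 1)) KL mK); first exact: tauP_W.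
move=> j. rewrite tauPE !haar_entryE // ee -/e.
rewrite tau_div //; last by rewrite eL; lia.
have -> : (q * 2 ^ (e + 1) %/ 2 ^ e = 2 * q)%N.
  have -> : (q * 2 ^ (e + 1) = (2 * q) * 2 ^ e)%N by rewrite expnD expn1; lia.
  by rewrite mulnK ?expn_gt0.
have -> : tauK (L - e) 0 (2 * q) (j %/ 2 ^ e) = xorn (j %/ 2 ^ e) (2 * q).
  rewrite /tauK -divnMA -expnD subnKC; last by rewrite eL; lia.
  by rewrite divn_small.
exact: hF_shift.
Qed.

Lemma inv_sqrt_norm (R : rcfType) k : ((Num.sqrt (2 ^+ k : R))^-1) ^+ 2 *+ (2 ^ k)%N = 1.
Proof.
rewrite exprVn sqr_sqrtr ?exprn_ge0 ?ler0n // -mulr_natr natrX mulVf //.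
by rewrite expf_neq0 // pnatr_eq0.
Qed.

Lemma sum_interval (R : rcfType) N a h (v : R) : (a + h + h <= N)%N ->
  \sum_(j < N) (if (a <= j < a + h)%N then v else if (a + h <= j < a + h + h)%N then - v else 0) ^+ 2
  = v ^+ 2 *+ (h + h).
Proof.
move=> hN.
rewrite -(big_mkord xpredT (fun j => (if (a <= j < a + h)%N then v else if (a + h <= j < a + h + h)%N then - v else 0) ^+ 2)).
rewrite (big_cat_nat _ (n := a) (m := 0) (p := N)) //=; last by lia.
rewrite (big_cat_nat _ (n := a + h) (m := a) (p := N)) //=; try lia.
rewrite (big_cat_nat _ (n := a + h + h) (m := a + h) (p := N)) //=; try lia.
rewrite (eq_big_nat _ _ (F2 := fun _ => 0)); last first.
  move=> j hj. have -> : (a <= j < a + h)%N = false by lia.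
  have -> : (a + h <= j < a + h + h)%N = false by lia. by rewrite expr0n.
rewrite (eq_big_nat _ _ (m := a) (n := a + h) (F2 := fun _ => v ^+ 2)); last first.
  move=> j hj. have -> : (a <= j < a + h)%N = true by lia. by [].
rewrite (eq_big_nat _ _ (m := a + h) (n := a + h + h) (F2 := fun _ => v ^+ 2)); last first.
  move=> j hj. have -> : (a <= j < a + h)%N = false by lia.
  have -> : (a + h <= j < a + h + h)%N = true by lia. by rewrite sqrrN.
rewrite (eq_big_nat _ _ (m := a + h + h) (n := N) (F2 := fun _ => 0)); last first.
  move=> j hj. have -> : (a <= j < a + h)%N = false by lia.
  have -> : (a + h <= j < a + h + h)%N = false by lia. by rewrite expr0n.
rewrite !sumr_const_nat !mul0rn add0r addr0 -mulrnDr.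
congr (_ *+ _); lia.
Qed.

Lemma col_norm (R : rcfType) L (c : 'I_(2 ^ L)) :
  \sum_(j < 2 ^ L) haar_entry R L j c ^+ 2 = 1.
Proof.
case: (posnP c) => c0.
  rewrite /haar_entry c0 eqxx sumr_const card_ord. exact: inv_sqrt_norm.
have [htL hpl lo eL] := ht_facts c0 (ltn_ord c).
set e := he L c in eL *. set p := hp c in hpl *.
under eq_bigr do rewrite haar_entryE // -/e -/p /hF -cond1 -cond2.
rewrite sum_interval.
  have -> : (2 ^ e + 2 ^ e = 2 ^ e.+1)%N by rewrite expnS; lia.
  exact: inv_sqrt_norm.
have -> : (2 ^ L = 2 ^ ht c * 2 ^ (e + 1))%N by rewrite -expnD addnA -eL.
have h2 : (2 ^ (e + 1) = 2 ^ e + 2 ^ e)%N by rewrite expnD expn1; lia.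
rewrite -addnA -h2 -[X in (_ <= X)%N]mulnC.
have : (p + 1 <= 2 ^ ht c)%N by lia.
move=> /(leq_mul (leqnn (2 ^ (e + 1)))). rewrite mulnDr muln1 mulnC. by [].
Qed.

Definition colH (R : rcfType) L (c : 'I_(2 ^ L)) : 'I_(2 ^ L) -> R :=
  fun i => haar_mx R L i c.

Lemma DH (R : rcfType) L (M : 'M[R]_(2 ^ L)) c d :
  ((haar_mx R L)^T *m M *m haar_mx R L) c d = bil (colH R c) (colH R d) M.
Proof. exact: DE. Qed.

Lemma off_aux (R : rcfType) L (M : 'M[R]_(2 ^ L)) (c d : 'I_(2 ^ L)) :
  (forall g, g \in W L -> forall i j, M (g i) (g j) = M i j) ->
  (0 < c)%N -> d != c -> ((d == 0 :> nat) || (he L c <= he L d))%N ->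
  bil (colH R c) (colH R d) M = 0.
Proof.
move=> hW c0 dc hd. have [g gW [hc hdd]] := col_flip R c0.
apply: (bil_zero (g := g)) => [i j|i|i]; rewrite /colH ?mxE.
- exact: hW.
- exact: hc.
- exact: hdd.
Qed.

Lemma offdiag (R : rcfType) L (M : 'M[R]_(2 ^ L)) :
  M^T = M -> (forall g, g \in W L -> forall i j, M (g i) (g j) = M i j) ->
  forall c d : 'I_(2 ^ L), c != d -> ((haar_mx R L)^T *m M *m haar_mx R L) c d = 0.
Proof.
move=> hs hW c d cd. rewrite DH.
case: (posnP c) => c0.
  rewrite bil_sym //. apply: off_aux => //.
    case: (posnP d) => // d0. move/eqP: cd; case. by apply: val_inj; rewrite /= c0 d0.
  by rewrite c0.
case: (posnP d) => d0.
  apply: off_aux => //; first by rewrite eq_sym. by rewrite d0.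
case: (leqP (he L c) (he L d)) => hle.
  apply: off_aux => //; first by rewrite eq_sym. by rewrite hle orbT.
rewrite bil_sym //. apply: off_aux => //. by rewrite ltnW ?orbT.
Qed.

Lemma diag_eq (R : rcfType) L (M : 'M[R]_(2 ^ L)) :
  (forall g, g \in W L -> forall i j, M (g i) (g j) = M i j) ->
  forall c c' : 'I_(2 ^ L), haar_scale c = haar_scale c' ->
  ((haar_mx R L)^T *m M *m haar_mx R L) c c = ((haar_mx R L)^T *m M *m haar_mx R L) c' c'.
Proof.
move=> hW c c' hs. rewrite !DH.
case: (posnP c) => c0; case: (posnP c') => c0'.
- by have -> : c = c' by apply: val_inj; rewrite /= c0 c0'.
- move: hs; by rewrite /haar_scale c0 eqxx (gtn_eqF c0').
- move: hs; by rewrite /haar_scale c0' eqxx (gtn_eqF c0).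
have ht_eq : ht c = ht c'.
  move: hs; rewrite /haar_scale (gtn_eqF c0) (gtn_eqF c0') /=. by case.
have [g gW hg] := col_shift R c0 c0' ht_eq.
rewrite -(bil_transport (colH R c') (colH R c') (hW g gW)).
rewrite /bil; apply: eq_bigr => i _; apply: eq_bigr => j _.
by rewrite /colH !mxE !hg.
Qed.

Lemma one_inv (R : rcfType) L :
  forall g, g \in W L -> forall i j, (1%:M : 'M[R]_(2 ^ L)) (g i) (g j) = 1%:M i j.
Proof. by move=> g _ i j; rewrite !mxE (inj_eq perm_inj). Qed.

Lemma bil_one (R : rcfType) n (u : 'I_n -> R) : bil u u 1%:M = \sum_k u k ^+ 2.
Proof.
rewrite /bil. apply: eq_bigr => k _.
rewrite (bigD1 k) //= [X in _ + X]big1 ?addr0.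
  by rewrite mxE eqxx mulr1 expr2.
by move=> l /negPf kl; rewrite mxE eq_sym kl mulr0 mul0r.
Qed.

Unset Implicit Arguments.

Theorem mainTheorem11 (R : rcfType) (L : nat) (hL : (0 < L)%N) :
  (haar_mx R L)^T *m haar_mx R L = 1%:M /\
  (forall M : 'M[R]_(2 ^ L), covariance M -> W_invariant M ->
     let D := (haar_mx R L)^T *m M *m haar_mx R L in
     (forall i j : 'I_(2 ^ L), i != j -> D i j = 0) /\
     (forall i j : 'I_(2 ^ L), haar_scale i = haar_scale j -> D i i = D j j)).
Proof.
split.
  have E : (haar_mx R L)^T *m haar_mx R L = (haar_mx R L)^T *m 1%:M *m haar_mx R L.
    by rewrite mulmx1.
  apply/matrixP => i j. rewrite E.
  case: (eqVneq i j) => [<-|ij]; last first.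
    by rewrite [RHS]mxE (negPf ij) (offdiag (trmx1 _ _) (@one_inv R L)).
  have -> : (1%:M : 'M[R]_(2 ^ L)) i i = 1 by rewrite mxE eqxx.
  rewrite DH bil_one -(col_norm R i). apply: eq_bigr => k _.
  by rewrite /colH mxE.
move=> M [hs _] hW D. split.
  apply: offdiag => //. exact: W_inv_entry.
apply: diag_eq. exact: W_inv_entry.
Qed.
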